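(* Let $\Pi$ be an equitative protocol for a distribution type $\tau$ and let $\rho$ be a run of $\Pi$. Then there is a constant $\gamma=\gamma(\rho)\in(0,1]$ such that for every deal $H$ of type $\tau$, $\Pr(\rho\mid H)=\gamma$ if $H\in\mathrm{Poss}(\rho)$ and $\Pr(\rho\mid H)=0$ otherwise.
   Context: Let $\mathcal A$ be a finite set of agents listed in speaking order $P_0,\dots,P_m$. A distribution type is a vector $\tau=(\tau_P)_{P\in\mathcal A}$ of positive integers, $|\tau|=\sum_P\tau_P$. The deck $\Omega$ is a set of $|\tau|$ cards; a deal of type $\tau$ is a partition $H=(H_P)_P$ of $\Omega$ with $|H_P|=\tau_P$. Fix a set of tokens; a run is a finite sequence $\rho=a_0,\dots,a_n$ of tokens, $\rho_{<k}=a_0,\dots,a_{k-1}$. A protocol for $\tau$ is a function $\Pi$ assigning to every deal $H$ and run $\rho$ a set of tokens $\Pi(H,\rho)$ such that if $k$ is the remainder of $|\rho|$ modulo $m+1$ and $H_{P_k}=H'_{P_k}$, then $\Pi(H,\rho)=\Pi(H',\rho)$. An execution is a pair $(H,\rho)$ with $a_k\in\Pi(H,\rho_{<k})$ for all $k\le n$; $\rho$ is a run of $\Pi$ if some $(H,\rho)$ is an execution. $\mathrm{Poss}(\rho)$ is the set of deals $H$ such that $(H,\rho)$ is an execution. $\Pi$ is equitative if for every run $\rho$ of $\Pi$ there is $k=k(\rho)$ with $|\Pi(H,\rho)|=k$ for all $H\in\mathrm{Poss}(\rho)$. Probability model: given the deal $H$, starting from the empty run, while $\Pi(H,\rho)\neq\emptyset$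 for the current run $\rho$ a token is drawn uniformly at random from $\Pi(H,\rho)$ and appended; $\Pr(\rho\mid H)$ is the probability that the first $|\rho|$ tokens produced are exactly $\rho$. *)

(* Defs.v *)
From HB Require Import structures.
From mathcomp Require Import all_boot all_order all_algebra.
From mathcomp Require Import finmap.
Set Implicit Arguments. Unset Strict Implicit. Unset Printing Implicit Defensive.
Import Order.TTheory GRing.Theory Num.Theory.
Local Open Scope fset_scope.

(* Agents P_0,...,P_m are 'I_(m.+1) (speaking order = order of indices).
   Cards form a finite type [Card]; a deal is a map assigning each card to the
   agent holding it; H_P is the preimage of P.
   Tokens form a choiceType [T]; Pi(H, rho) is a finite set {fset T}. *)

Section Defs.
Variables (m : nat) (Card : finType) (T : choiceType).

Definition deal := {ffun Card -> 'I_m.+1}.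

Definition hand (H : deal) (P : 'I_m.+1) : {set Card} := [set c | H c == P].

Definition is_deal (tau : 'I_m.+1 -> nat) (H : deal) : Prop :=
  forall P, #|hand H P| = tau P.

Definition distribution_type (tau : 'I_m.+1 -> nat) : Prop :=
  (forall P, 0 < tau P)%N /\ #|Card| = (\sum_(P < m.+1) tau P)%N.

Definition speaker (rho : seq T) : 'I_m.+1 := inord (size rho %% m.+1).

Definition is_protocol (tau : 'I_m.+1 -> nat)
    (Pi : deal -> seq T -> {fset T}) : Prop :=
  forall (H H' : deal) (rho : seq T), is_deal tau H -> is_deal tau H' ->
    hand H (speaker rho) = hand H' (speaker rho) -> Pi H rho = Pi H' rho.

Definition execution (Pi : deal -> seq T -> {fset T}) (H : deal) (rho : seq T)
    : Prop :=
  forall k, (k < size rho)%N ->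
    forall a0 : T, nth a0 rho k \in Pi H (take k rho).

Definition is_run (tau : 'I_m.+1 -> nat) (Pi : deal -> seq T -> {fset T})
    (rho : seq T) : Prop :=
  exists H, is_deal tau H /\ execution Pi H rho.

Definition Poss (tau : 'I_m.+1 -> nat) (Pi : deal -> seq T -> {fset T})
    (rho : seq T) (H : deal) : Prop :=
  is_deal tau H /\ execution Pi H rho.

Definition equitative (tau : 'I_m.+1 -> nat)
    (Pi : deal -> seq T -> {fset T}) : Prop :=
  forall rho, is_run tau Pi rho ->
    exists k : nat, forall H, Poss tau Pi rho H -> #|` Pi H rho| = k.

(* Pr(rho | H): probability that the random process (drawing uniformly from
   Pi(H, current run) while it is nonempty) produces rho as its first |rho|
   tokens.  By the chain rule this is the product over k < |rho| of the
   probability that the k-th draw is a_k given the first k draws were rho_<k,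
   namely 1/|Pi(H,rho_<k)| if a_k \in Pi(H,rho_<k), and 0 otherwise (in
   particular 0 if the process has stopped, i.e. Pi(H,rho_<k) is empty). *)
Definition prob_run (R : realFieldType) (Pi : deal -> seq T -> {fset T})
    (H : deal) (rho : seq T) : R :=
  \prod_(k < size rho)
    (match rho with
     | [::] => 0
     | a0 :: _ =>
       if nth a0 rho k \in Pi H (take k rho)
       then (#|` Pi H (take k rho)|%:R)^-1 else 0
     end)%R.

End Defs.

(* Main.v *)
Require Import Defs.
From HB Require Import structures.
From mathcomp Require Import all_boot all_order all_algebra.
From mathcomp Require Import finmap.
Import Order.TTheory GRing.Theory Num.Theory.
Local Open Scope ring_scope.

Lemma exec_take (m : nat) (Card : finType) (T : choiceType)
  (Pi : deal m Card -> seq T -> {fset T}) H rho k :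
  execution Pi H rho -> execution Pi H (take k rho).
Proof.
move=> E j hj a0.
have hjk : (j < k)%N.
  by move: hj; rewrite size_take_min leq_min => /andP[].
have hjs : (j < size rho)%N.
  by move: hj; rewrite size_take_min leq_min => /andP[].
rewrite (nth_take _ hjk) (take_takel _ (ltnW hjk)).
exact: (E j hjs a0).
Qed.
Theorem mainTheorem3 (R : realFieldType) (m : nat) (Card : finType)
    (T : choiceType) (tau : 'I_m.+1 -> nat)
    (Pi : deal m Card -> seq T -> {fset T}) (rho : seq T) :
  distribution_type Card tau ->
  is_protocol tau Pi ->
  equitative tau Pi ->
  is_run tau Pi rho ->
  exists gamma : R, 0 < gamma /\ gamma <= 1 /\
    forall H : deal m Card, is_deal tau H ->
      (Poss tau Pi rho H -> prob_run R Pi H rho = gamma) /\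
      (~ Poss tau Pi rho H -> prob_run R Pi H rho = 0).
Proof.
move=> _ _ Eq [H0 [D0 E0]].
exists (prob_run R Pi H0 rho).
rewrite /prob_run.
case: rho E0 Eq => [|a0 r] E0 Eq.
  rewrite /= big_ord0; split; first exact: ltr01.
  split; first exact: lexx.
  move=> H DH; split=> // NP; exfalso; apply: NP; split=> // k; by [].
set rho := a0 :: r.
have inI : forall (k : 'I_(size rho)), nth a0 rho k \in Pi H0 (take k rho).
  by move=> k; apply: E0.
have hp : forall (k : 'I_(size rho)), (0 < #|` Pi H0 (take k rho)|)%N.
  by move=> k; rewrite cardfs_gt0; apply/fset0Pn; exists (nth a0 rho k).
split; [|split].
- apply: prodr_gt0 => k _; rewrite inI invr_gt0 ltr0n; exact: hp.
- apply: prodr_ile1 => k _; rewrite inI.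
  by rewrite invr_ge0 ler0n /= invf_le1 ?ltr0n ?ler1n ?hp.
- move=> H DH; split.
  + move=> [_ EH]; apply: eq_bigr => k _.
    have hk : nth a0 rho k \in Pi H (take k rho) by apply: EH.
    rewrite inI hk.
    have [c Hc] := Eq (take k rho) (ex_intro _ H0 (conj D0 (exec_take _ _ _ _ _ _ k E0))).
    by rewrite (Hc H (conj DH (exec_take _ _ _ _ _ _ k EH))) (Hc H0 (conj D0 (exec_take _ _ _ _ _ _ k E0))).
  + move=> NP.
    have NE : ~ execution Pi H rho by move=> E; apply: NP.
    have [k Hk] : exists k : 'I_(size rho), nth a0 rho k \notin Pi H (take k rho).
      apply/existsP; rewrite -negb_forall; apply/negP => /forallP F; apply: NE.
      move=> k hk b; rewrite (set_nth_default a0 b hk); exact: (F (Ordinal hk)).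
    by rewrite (bigD1 k) //= (negbTE Hk) mul0r.
Qed.
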